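(* Let $G=(V,E)$ be a finite connected chordal graph. (i) If $\operatorname{diam}(G)<2\operatorname{rad}(G)$ then, for every vertices $s\in V$ and $t\in F(s)$, there is a vertex $w\in I(s,t)\cap C(G)$ such that $t\in F(w)$. (ii) If $\operatorname{diam}(G)=2\operatorname{rad}(G)$ then, for every vertices $s\in V$ and $t\in F(s)$, there is a vertex $w\in I(s,t)\cap C^1(G)$ such that $t\in F(w)$.
   Context: A graph is chordal if every induced cycle of length at least 4 has a chord. $d$ is the shortest-path distance, $e(v)=\max_u d(v,u)$, $\operatorname{rad}(G)=\min_v e(v)$, $\operatorname{diam}(G)=\max_v e(v)$. $F(s)=\{v: d(v,s)=e(s)\}$; $C(G)=\{c: e(c)=\operatorname{rad}(G)\}$; $C^1(G)=\{v: e(v)\le\operatorname{rad}(G)+1\}$; $I(u,v)=\{x: d(u,x)+d(x,v)=d(u,v)\}$. *)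

(* Defs.v *)
From mathcomp Require Import all_boot.
Local Open Scope nat_scope.
Set Implicit Arguments. Unset Strict Implicit. Unset Printing Implicit Defensive.

Section Graph.
Variables (T : finType) (e : rel T).

Definition simple_graph : Prop := symmetric e /\ irreflexive e.

Fixpoint walkn (n : nat) (x y : T) : bool :=
  match n with
  | 0 => x == y
  | n'.+1 => [exists z, e x z && walkn n' z y]
  end.

Definition connected_graph : Prop := forall x y : T, connect e x y.

(* shortest-path distance: least n with a walk of length n (any walk can be
   shortened to a path, of length < #|T|); defined as #|T| if unreachable *)
Definition dist (x y : T) : nat := find (fun n => walkn n x y) (iota 0 #|T|).

Definition ecc (v : T) : nat := \max_(u : T) dist v u.
(* minimum over a nonempty vertex set; the neutral element #|T| bounds all
   eccentricities, so it does not affect the value when T is nonempty *)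
Definition rad : nat := \big[minn/#|T|]_(v : T) ecc v.
Definition diam : nat := \max_(v : T) ecc v.

Definition far (s : T) : {set T} := [set v | dist v s == ecc s].
Definition center : {set T} := [set c | ecc c == rad].
Definition center1 : {set T} := [set v | ecc v <= rad.+1].
Definition interval (u v : T) : {set T} :=
  [set x | dist u x + dist x v == dist u v].

(* A cycle: a duplicate-free sequence c of vertices with consecutive
   (cyclically) vertices adjacent. A chord of c: an edge between two vertices
   of c that are not consecutive on the cycle. *)
Definition is_cycle (c : seq T) : bool := uniq c && cycle e c.

Definition has_chord (c : seq T) : bool :=
  [exists i : 'I_(size c), exists j : 'I_(size c),
     [&& (i < j)%N, (j != i.+1 :> nat), ~~ ((i == 0 :> nat) && (j.+1 == size c)) &
         e (tnth (in_tuple c) i) (tnth (in_tuple c) j)]].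

Definition chordal : Prop :=
  forall c : seq T, is_cycle c -> (4 <= size c)%N -> has_chord c.

End Graph.

(* Main.v *)
Require Import Defs.
From mathcomp Require Import all_boot.
From mathcomp Require Import zify.
Set Implicit Arguments. Unset Strict Implicit. Unset Printing Implicit Defensive.

Section Proof.
Variables (T : finType) (e : rel T).
Hypothesis esym : symmetric e.
Hypothesis eirr : irreflexive e.
Hypothesis econ : connected_graph e.

Local Notation d := (dist e).
Local Notation N := #|T|.

Ltac clean := repeat match goal with
 | H : ?P |- _ => lazymatch type of P with Prop => clear H end
 end; repeat match goal with |- context [dist e ?a ?b] => generalize (dist e a b); intro end.


Lemma walkn_cat m n x y z : walkn e m x y -> walkn e n y z -> walkn e (m + n) x z.
Proof.
elim: m x => [|m IH] x /=; first by move=> /eqP->.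
case/existsP=> u /andP[exu wu] wyz; apply/existsP; exists u; rewrite exu /=; exact: IH.
Qed.

Lemma walkn1 x y : walkn e 1 x y = e x y.
Proof.
apply/existsP/idP => [[z /andP[h /eqP<-]]|h] //; exists y; by rewrite h eqxx.
Qed.

Lemma walkn_sym n x y : walkn e n x y -> walkn e n y x.
Proof.
elim: n x => [|n IH] x; first by move=> /= /eqP->.
case/existsP=> u /andP[exu wu]; rewrite -addn1; apply: (walkn_cat (IH _ wu)).
by rewrite walkn1 esym.
Qed.

Lemma walkn_path n x y : walkn e n x y -> exists p, [/\ path e x p, last x p = y & size p = n].
Proof.
elim: n x => [|n IH] x /=; first by move=> /eqP->; exists [::].
case/existsP=> u /andP[exu /IH [p [pp lp sp]]]; exists (u :: p) => /=.
by rewrite exu pp lp sp.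
Qed.

Lemma path_walkn x p : path e x p -> walkn e (size p) x (last x p).
Proof.
elim: p x => [|u p IH] x /=; first by rewrite eqxx.
case/andP=> exu pp; apply/existsP; exists u; rewrite exu; exact: IH.
Qed.

Lemma walk_short n x y : walkn e n x y -> exists2 m, m < N & walkn e m x y.
Proof.
move/walkn_path=> [p [pp <- _]].
case: (shortenP pp) => p' pp' up' _.
exists (size p'); last exact: path_walkn.
move/card_uniqP: up' => /= h.
have := max_card (mem (x :: p')); rewrite h; done.
Qed.

Lemma dist_has x y : has (fun n => walkn e n x y) (iota 0 N).
Proof.
have /connectP [p pp ->] := econ x y.
have [m lm wm] := walk_short (path_walkn pp).
by apply/hasP; exists m => //; rewrite mem_iota.
Qed.

Lemma d_lt x y : d x y < N.
Proof. by have := dist_has x y; rewrite has_find size_iota. Qed.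

Lemma dist_walk x y : walkn e (d x y) x y.
Proof.
have := nth_find 0 (dist_has x y); rewrite nth_iota ?add0n //.
by have := d_lt x y; rewrite /dist.
Qed.

Lemma dist_min n x y : walkn e n x y -> d x y <= n.
Proof.
move=> w; case: (leqP N n) => hn; first by apply: leq_trans (ltnW (d_lt x y)) hn.
rewrite leqNgt; apply/negP => hlt.
by have := before_find 0 hlt; rewrite nth_iota // add0n w.
Qed.

Lemma d_refl x : d x x = 0.
Proof. by apply/eqP; rewrite -leqn0; apply: dist_min; rewrite /= eqxx. Qed.

Lemma d_eq0 x y : d x y = 0 -> x = y.
Proof. by move=> h; have := dist_walk x y; rewrite h /= => /eqP. Qed.

Lemma d_tri x y z : d x z <= d x y + d y z.
Proof. by apply: dist_min; apply: walkn_cat (dist_walk _ _) (dist_walk _ _). Qed.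

Lemma d_sym x y : d x y = d y x.
Proof.
by apply/eqP; rewrite eqn_leq; apply/andP; split; apply: dist_min; apply: walkn_sym; apply: dist_walk.
Qed.

Lemma d_edge x y : e x y -> d x y = 1.
Proof.
move=> h; apply/eqP; rewrite eqn_leq; apply/andP; split.
  by apply: dist_min; rewrite walkn1.
rewrite lt0n; apply/negP => /eqP /d_eq0 xy; by rewrite xy eirr in h.
Qed.

Lemma d_adj x y z : e x y -> d x z <= (d y z).+1.
Proof. by move=> h; apply: leq_trans (d_tri x y z) _; rewrite d_edge. Qed.

Lemma d_step x y : 0 < d x y -> exists2 z, e x z & (d z y).+1 = d x y.
Proof.
move=> h; have := dist_walk x y; case E: (d x y) h => [|n] //= _.
case/existsP => z /andP[exz wz]; exists z => //.
apply/eqP; rewrite eqn_leq; apply/andP; split; first exact: dist_min.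
by rewrite -E d_adj.
Qed.


Hypothesis echo : chordal e.

Lemma chord_split (y0 : T) c : has_chord e c ->
  exists A a M b B, [/\ c = A ++ a :: M ++ b :: B, e a b, M != [::] & (A != [::]) || (B != [::])].
Proof.
case/existsP=> i /existsP [j /and4P [ij jn ni eij]].
rewrite !(tnth_nth y0) /= in eij.
have hi := ltn_ord i; have hj := ltn_ord j.
exists (take i c), (nth y0 c i), (take (j - i.+1) (drop i.+1 c)), (nth y0 c j), (drop j.+1 c).
split => //.
- rewrite -{1}(cat_take_drop i c) (drop_nth y0 hi); congr (_ ++ _ :: _).
  rewrite -{1}(cat_take_drop (j - i.+1) (drop i.+1 c)) drop_drop subnK //.
  by rewrite (drop_nth y0 hj).
- have hij : i.+1 < j by rewrite ltn_neqAle eq_sym jn ij.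
  rewrite -size_eq0 size_take size_drop; case: ifP => _.
  + by rewrite -lt0n subn_gt0.
  + by rewrite -lt0n subn_gt0; apply: ltn_trans hij hj.
- rewrite -!size_eq0 size_takel ?size_drop; last exact: ltnW.
  have : (i != 0 :> nat) || (j.+1 != size c) by rewrite -negb_and.
  case/orP => [->//|hn]; apply/orP; right.
  by rewrite -lt0n subn_gt0 ltn_neqAle hn hj.
Qed.

Lemma sorted_split (A M B : seq T) a b :
  sorted e (A ++ a :: M ++ b :: B) -> sorted e (rcons A a) /\ sorted e (b :: B).
Proof.
rewrite sorted_cat_cons cat_path => /and3P[h1 _ /= /andP[_ h2]]; by split.
Qed.

Lemma sorted_join (A B : seq T) a b :
  sorted e (rcons A a) -> e a b -> sorted e (b :: B) -> sorted e (A ++ a :: b :: B).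
Proof. by move=> h1 h2 h3; rewrite sorted_cat_cons h1 /= h2. Qed.

Lemma cyc_tri n (c : seq T) (y x : T) : size c = n ->
  uniq c -> sorted e c -> 3 <= size c -> head y c = y -> last y c = x -> e x y ->
  exists z, [/\ z \in c, z != y, z != x, e z y & e z x].
Proof.
elim: n {-2}n (leqnn n) c => [|n IH] m hm c hs.
  by move=> _ _ h3; move: hm h3; rewrite -hs; lia.
move=> uc sc h3 hy hx exy.
case: (ltnP 3 (size c)) => h4; last first.
  have : size c = 3 by apply/eqP; rewrite eqn_leq h4 h3.
  case: c hs h3 h4 uc sc hy hx => [|a [|b [|c' [|]]]] //= _ _ _ uc sc hy hx _.
  move: uc sc; rewrite hy hx !inE /= => /and3P[/norP[ya yx] bx _] /and3P[hyb hbx _].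
  exists b; rewrite !inE eqxx orbT; split => //; first by rewrite eq_sym.
  by rewrite esym.
have hc : has_chord e c.
  apply: echo => //; rewrite /is_cycle uc /=.
  case: c hs sc h3 h4 uc hy hx => [|a r] //= _ sc _ _ _ hy hx.
  by rewrite rcons_path sc hx hy exy.
have [A [a [M [b [B [ceq eab Mn AB]]]]]] := chord_split y hc.
set c' := A ++ a :: b :: B.
have hsub : subseq c' c.
  rewrite ceq; apply: cat_subseq (subseq_refl A) _.
  rewrite -cat1s -(cat1s a (M ++ _)); apply: cat_subseq (subseq_refl _) _.
  exact: suffix_subseq.
have hmem : {subset c' <= c} by apply: mem_subseq.
have g1 : size c' <= n.
  move: hm; rewrite -hs ceq !size_cat /= size_cat /=.
  by case: M Mn {ceq c' hsub hmem} => // ? ?; rewrite /= => _; lia.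
have g2 : uniq c' by exact: subseq_uniq uc.
have g3 : sorted e c' by move: sc; rewrite ceq => /sorted_split [h1 h2]; apply: sorted_join.
have g4 : 3 <= size c'.
  rewrite /c' size_cat /=; case/orP: AB.
  + by case: A {ceq c' hsub hmem g1 g2 g3} => //= ? ? _; lia.
  + by case: B {ceq c' hsub hmem g1 g2 g3} => //= ? ? _; lia.
have g5 : head y c' = y by move: hy; rewrite ceq /c'; case: A {ceq c' hsub hmem AB g1 g2 g3 g4}.
have g6 : last y c' = x by move: hx; rewrite ceq /c' !last_cat /= last_cat.
have [z [zc zy zx zey zex]] := IH (size c') g1 c' erefl g2 g3 g4 g5 g6 exy.
by exists z; split => //; apply: hmem.
Qed.

Lemma tri y x s : e x y -> path e y (rcons s x) -> y \notin s -> x \notin s -> s != [::] ->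
  exists2 z, z \in s & e z x && e z y.
Proof.
move=> exy ps ys xs sn.
have xy : x != y by apply/negP => /eqP xy; rewrite xy eirr in exy.
pose e' := fun a b => e a b && ~~ ((a == y) && (b == x)).
have ps' : path e' y (rcons s x).
  case: s ps ys xs sn => [|s0 s1] //= /andP[hy0 hp] ys xs _.
  move: xs; rewrite inE negb_or => /andP[xs0 xs1].
  rewrite /e' hy0 eqxx /= eq_sym (negbTE xs0) /=.
  have ee' : {in predC1 y &, subrel e e'}.
    by move=> a b ay _ h; rewrite /e' h /= (negbTE ay).
  apply: (sub_in_path ee') hp.
  rewrite /= all_rcons /= xy /=.
  move: ys; rewrite inE negb_or => /andP[ys0 ys1]; rewrite eq_sym ys0 /=.
  by apply/allP => a ha /=; apply/eqP => ay; move: ys1; rewrite -ay ha.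
move: (last_rcons y s x); case: (shortenP ps') => p' pp' up' sub lx.
have hp : path e y p' by apply: sub_path pp' => a b /andP[].
case: p' pp' up' sub lx hp => [|a [|b p]] /=.
- by move=> _ _ _ xy'; rewrite xy' eqxx in xy.
- by move=> /andP[/andP[_ ]]; rewrite eqxx => /= hn _ _ _ ax; rewrite ax eqxx in hn.
move=> _ up sub lx hp.
have [z [zc zy zx zey zex]] := @cyc_tri _ (y :: a :: b :: p) y x erefl up hp isT erefl lx exy.
exists z; last by rewrite zex zey.
have : z \in rcons s x.
  move: zc; rewrite inE (negbTE zy) /= => zc; exact: sub.
by rewrite mem_rcons inE (negbTE zx).
Qed.


Lemma d_pos x y : x != y -> 0 < d x y.
Proof. by move=> xy; rewrite lt0n; apply/negP => /eqP /d_eq0 h; rewrite h eqxx in xy. Qed.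

Lemma geod x y : x != y -> exists p, [/\ path e x (rcons p y),
  (forall z, z \in p -> d x z + d z y = d x y),
  (forall z, z \in p -> 0 < d x z) & (forall z, z \in p -> 0 < d z y)].
Proof.
have [n] := ubnP (d x y); elim: n x => // n IH x hlt xy.
have [z exz hz] := d_step (d_pos xy).
have dxz := d_edge exz.
case: (eqVneq z y) => [zy|zy].
  by exists [::]; split => //=; rewrite -zy exz.
have [|p [pp h1 h2 h3]] := IH z _ zy; first by lia.
exists (z :: p); split.
- by rewrite /= exz pp.
- move=> w; rewrite inE => /orP[/eqP->|wp]; first by lia.
  have := h1 w wp; have := d_adj w exz; have := d_tri x w y; lia.
- move=> w; rewrite inE => /orP[/eqP->|wp]; first by lia.
  rewrite lt0n; apply/negP => /eqP /d_eq0 xw; move: wp; rewrite -xw => wp.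
  have := h1 x wp; lia.
- move=> w; rewrite inE => /orP[/eqP->|wp]; first exact: d_pos.
  exact: h3.
Qed.

Lemma tc u v x : e u v -> d u x = d v x -> 0 < d u x ->
  exists z, [/\ e z u, e z v & (d z x).+1 = d u x].
Proof.
move=> euv duv hpos.
have uv : u != v by apply/negP => /eqP h; rewrite h eirr in euv.
have ux : u != x by apply/negP => /eqP h; rewrite h d_refl in hpos.
have xv : x != v by apply/negP => /eqP h; rewrite duv h d_refl in hpos.
have dv := d_edge euv.
have [P [pP hP1 hP2 hP3]] := geod ux.
have [Q [pQ hQ1 hQ2 hQ3]] := geod xv.
have evu : e v u by rewrite esym.
have sx := d_sym x u; have sv := d_sym x v.
have pth : path e u (rcons (P ++ x :: Q) v).
  by rewrite -cat_rcons rcons_cat cat_path pP last_rcons.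
have nu : u \notin P ++ x :: Q.
  rewrite mem_cat inE negb_or negb_or; apply/and3P; split.
  - by apply/negP => /hP2; rewrite d_refl.
  - exact: ux.
  - apply/negP => /hQ1; move: sx sv duv dv; clean; lia.
have nv : v \notin P ++ x :: Q.
  rewrite mem_cat inE negb_or negb_or; apply/and3P; split.
  - apply/negP => /hP1; move: duv dv; clean; lia.
  - by rewrite eq_sym.
  - by apply/negP => /hQ3; rewrite d_refl.
have [|z zs /andP[zv zu]] := tri evu pth nu nv.
  by case: (P).
exists z; split => //.
have dzu := d_edge zu; have dzv := d_edge zv.
move: zs; rewrite mem_cat inE => /orP[zP|/orP[/eqP zx|zQ]].
- move: (hP1 z zP) (d_sym u z) dzu; clean; lia.
- by move: dzu; rewrite zx d_refl -(d_sym x u) => ->.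
- move: (hQ1 z zQ) (d_sym z x) dzv sv duv; clean; lia.
Qed.


Lemma alpha1 u v w x : e v w -> d u w = (d u v).+1 -> d v x = (d w x).+1 ->
  d u v + d w x <= d u x.
Proof.
move=> evw huw hvx.
case: (posnP (d u v)) => [a0|apos].
  by move: hvx; rewrite a0 -(d_eq0 a0) => ->; lia.
case: (posnP (d w x)) => [b0|bpos].
  by move: huw; rewrite b0 (d_eq0 b0) => ->; lia.
rewrite leqNgt; apply/negP => hlt.
have dvw := d_edge evw.
have ewv : e w v by rewrite esym.
have dwv := d_edge ewv.
have uv : u != v by apply/negP => /eqP h; rewrite h d_refl in apos.
have wx : w != x by apply/negP => /eqP h; rewrite h d_refl in bpos.
have xu : x != u.
  apply/negP => /eqP h; move: hlt huw hvx; rewrite h d_refl (d_sym v u) (d_sym w u).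
  clean; lia.
have [Q [pQ hQ1 hQ2 hQ3]] := geod wx.
have [R [pR hR1 hR2 hR3]] := geod xu.
have [P [pP hP1 hP2 hP3]] := geod uv.
have s1 := d_sym x u; have s2 := d_sym u w; have s3 := d_sym x v; have s4 := d_sym v u.
have s0 := d_sym x w.
have pth : path e w (rcons (Q ++ x :: R ++ u :: P) v).
  rewrite -cat_rcons rcons_cat cat_path pQ last_rcons /=.
  by rewrite -cat_rcons rcons_cat cat_path pR last_rcons.
have nw : w \notin Q ++ x :: R ++ u :: P.
  apply/negP; rewrite !(mem_cat, inE).
  case/orP=> [h|/orP[/eqP h|/orP[h|/orP[/eqP h|h]]]].
  - by have := hQ2 w h; rewrite d_refl.
  - by rewrite h eqxx in wx.
  - move: (hR1 w h) s0 s2 s1 huw hlt; clean; lia.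
  - by move: huw; rewrite h d_refl.
  - move: (hP1 w h) huw; clean; lia.
have nv : v \notin Q ++ x :: R ++ u :: P.
  apply/negP; rewrite !(mem_cat, inE).
  case/orP=> [h|/orP[/eqP h|/orP[h|/orP[/eqP h|h]]]].
  - move: (hQ1 v h) dwv hvx; clean; lia.
  - by move: hvx; rewrite h d_refl.
  - move: (hR1 v h) s3 s4 s1 hvx hlt; clean; lia.
  - by rewrite h eqxx in uv.
  - by have := hP3 v h; rewrite d_refl.
have [|z zs /andP[zv zw]] := tri evw pth nw nv.
  by case: (Q).
have ewz : e w z by rewrite esym.
have evz : e v z by rewrite esym.
have a1 := d_adj u ewz; have a2 := d_adj x evz.
have s5 := d_sym u z; have s6 := d_sym z x; have s7 := d_sym x z.
move: zs; rewrite !(mem_cat, inE).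
case/orP=> [h|/orP[/eqP h|/orP[h|/orP[/eqP h|h]]]].
- move: (hQ1 z h) (hQ2 z h) a2 hvx; clean; lia.
- move: zv bpos; rewrite h => /d_edge; rewrite (d_sym x v) hvx; clean; lia.
- move: (hR1 z h) a1 a2 s2 s7 s1 huw hvx hlt; clean; lia.
- move: zw apos; rewrite h => /d_edge; rewrite huw; clean; lia.
- move: (hP1 z h) (hP3 z h) a1 s2 s5 huw; clean; lia.
Qed.


Lemma key s t k : 0 < k -> (forall x, d s x <= k) -> d s t = k ->
  (forall x y, (d x y).+3 <= k.*2) ->
  exists w, [/\ e s w, (d w t).+1 = k & forall x, (d w x).+1 <= k].
Proof.
move=> kpos hs hst hD.
suff [w [esw hwt hw]] : exists w, [/\ e s w, (d w t).+1 = k &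
    forall x, x \in enum T -> (d w x).+1 <= k].
  by exists w; split => // x; apply: hw; rewrite mem_enum.
elim: (enum T) => [|x l [w [esw hwt hw]]].
  have hpos : 0 < d s t by rewrite hst.
  have [w esw hw] := d_step hpos.
  by exists w; split => //; rewrite hw.
case: (leqP (d w x).+1 k) => hx.
  by exists w; split => // y; rewrite inE => /orP[/eqP->|]; [exact: hx|exact: hw].
have ews : e w s by rewrite esym.
have b1 := d_adj x ews.
have b2 := d_adj x esw.
have hsx := hs x.
case: (ltnP (d s x) k) => hsx'.
  have e1 : d x w = (d x s).+1.
    rewrite (d_sym x w) (d_sym x s); move: b1 hx hsx'; clean; lia.
  have e2 : d s t = (d w t).+1 by move: hst hwt; clean; lia.
  have := alpha1 esw e1 e2; have := hD x t.
  move: e1 hsx' hst hwt b1 hx (d_sym x s); clean; lia.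
case: (ltnP k (d w x)) => hwx.
  have e1 : d t s = (d t w).+1.
    by rewrite (d_sym t s) (d_sym t w); move: hst hwt; clean; lia.
  have e2 : d w x = (d s x).+1 by move: hsx hsx' hwx b1; clean; lia.
  have := alpha1 ews e1 e2; have := hD t x.
  move: (d_sym t s) (d_sym t w) hst hwt hsx hsx'; clean; lia.
have e3 : d w x = d s x by move: hsx hsx' hwx hx; clean; lia.
have [z [ezw ezs hzx]] := tc ews e3 (leq_trans kpos hx).
have ewz : e w z by rewrite esym.
have esz : e s z by rewrite esym.
have claim : forall y, (d w y).+1 <= k -> (d z y).+1 <= k.
  move=> y hy; rewrite leqNgt; apply/negP => hzy.
  have c1 := d_adj y ezw.
  have f1 : d y z = (d y w).+1.
    rewrite (d_sym y z) (d_sym y w); move: hy hzy c1; clean; lia.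
  have f2 : d w x = (d z x).+1 by move: hzx.
  have := alpha1 ewz f1 f2; have := hD y x.
  move: f1 f2 hy hzy c1 hx hwx (d_sym y w) (d_sym y z); clean; lia.
exists z; split => //.
  have := claim t; have := d_adj t esz; move: hst hwt; clean; lia.
move=> y; rewrite inE => /orP[/eqP->|/hw /claim //].
by move: hzx hx hwx; clean; lia.
Qed.

Lemma ecc_ge s x : d s x <= ecc e s.
Proof. rewrite /ecc; exact: (leq_bigmax (F := fun u => d s u) x). Qed.

Lemma ecc_le s m : (forall x, d s x <= m) -> ecc e s <= m.
Proof. by move=> h; apply/bigmax_leqP => x _; apply: h. Qed.

Lemma main_gen m : (forall k, m < k -> forall x y, (d x y).+3 <= k.*2) ->
  forall s t, d s t = ecc e s ->
  exists w, [/\ d s w + d w t = d s t, ecc e w <= m & d w t = ecc e w].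
Proof.
move=> hD s t; have [n] := ubnP (ecc e s); elim: n s => // n IH s hn hst.
case: (leqP (ecc e s) m) => hm.
  by exists s; split => //; rewrite d_refl.
have kpos : 0 < ecc e s by move: hm; clean; lia.
have [w1 [esw hwt hw]] := key kpos (@ecc_ge s) hst (hD _ hm).
have h1 := ecc_ge w1 t.
have h2 : ecc e w1 <= (ecc e s).-1 by apply: ecc_le => x; move: (hw x); clean; lia.
have [||w [g1 g2 g3]] := IH w1.
- by move: hn h1 h2 hwt kpos; clean; lia.
- by move: h1 h2 hwt kpos; clean; lia.
exists w; split => //.
have := d_tri s w1 w; have := d_edge esw; have := d_tri s w t.
move: g1 h1 h2 hwt hst kpos; clean; lia.
Qed.

Lemma rad_le v : rad e <= ecc e v.
Proof.
rewrite /rad; have : v \in index_enum T by rewrite mem_index_enum.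
elim: (index_enum T) => // a l IH; rewrite inE big_cons => /orP[/eqP->|/IH h].
  exact: geq_minl.
exact: leq_trans (geq_minr _ _) h.
Qed.

Lemma diam_ge x y : d x y <= diam e.
Proof.
apply: leq_trans (ecc_ge x y) _; rewrite /diam; exact: (leq_bigmax (F := fun u => ecc e u) x).
Qed.

Lemma prop_in :
  ((diam e < 2 * rad e)%N ->
     forall s t : T, t \in far e s ->
       exists w : T, [/\ w \in interval e s t, w \in center e & t \in far e w]) /\
  (diam e = 2 * rad e ->
     forall s t : T, t \in far e s ->
       exists w : T, [/\ w \in interval e s t, w \in center1 e & t \in far e w]).
Proof.
split => [hlt|heq] s t; rewrite inE => /eqP hts; have hst : d s t = ecc e s by rewrite d_sym.
- have [|w [h1 h2 h3]] := main_gen (m := rad e) _ hst.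
    move=> k hk x y; have := diam_ge x y; move: hlt hk; clean; lia.
  exists w; rewrite !inE h1 eqxx /=; split => //.
    by rewrite eqn_leq h2 rad_le.
  by rewrite d_sym h3.
- have [|w [h1 h2 h3]] := main_gen (m := (rad e).+1) _ hst.
    move=> k hk x y; have := diam_ge x y; move: heq hk; clean; lia.
  exists w; rewrite !inE h1 eqxx /=; split => //.
  by rewrite d_sym h3.
Qed.

End Proof.

Theorem proposition7 (T : finType) (e : rel T) :
  simple_graph e -> connected_graph e -> chordal e ->
  ((diam e < 2 * rad e)%N ->
     forall s t : T, t \in far e s ->
       exists w : T, [/\ w \in interval e s t, w \in center e & t \in far e w]) /\
  (diam e = 2 * rad e ->
     forall s t : T, t \in far e s ->
       exists w : T, [/\ w \in interval e s t, w \in center1 e & t \in far e w]).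
Proof.
move=> [hs hi] hc hch; exact: prop_in.
Qed.
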